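(* Let $d=2$, $n\ge 2$, $\varepsilon=1/256$, and let $f$ be a stable update function. There exists $K>0$ (depending on $n$ and $f$) such that for every configuration $\mathcal U^{(0)}$ of $n$ opinions in $\mathbb S^1$ which is $\varepsilon$-inactive but active, there exists a sequence of at most $K$ interventions after which the resulting configuration is strictly convex.
   Context: Opinions are unit vectors in $\mathbb R^d$; a configuration is an $n$-tuple $(\vec u_1,\dots,\vec u_n)$ and $A_{ij}=\langle\vec u_i,\vec u_j\rangle$. An intervention $(i,j)$, $i\ne j$, replaces $\vec u_i$ by $\vec w/\|\vec w\|$ with $\vec w=\vec u_i+f(A_{ij})\vec u_j$, leaving others unchanged. $f:[-1,1]\to\mathbb R$ is stable if continuous and $\operatorname{sign}f(A)=\operatorname{sign}A$ for all $A$. For $0\le\varepsilon<1$, a configuration is $\varepsilon$-active if there exist $i,j$ with $\varepsilon<|A_{ij}|<1-\varepsilon$, and $\varepsilon$-inactive otherwise; ''active'' means $0$-active. Strictly convex: there exist $b_1,\dots,b_n\in\{\pm1\}$ with $\langle b_i\vec u_i,b_j\vec u_j\rangle>0$ for all $i,j$. *)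

(* Defs.v *)
From Stdlib Require Import Reals Lra List.
Open Scope R_scope.

Definition vec : Type := (R * R)%type.
Definition ip (u v : vec) : R := fst u * fst v + snd u * snd v.
Definition vnorm (u : vec) : R := sqrt (ip u u).
Definition vadd (u v : vec) : vec := (fst u + fst v, snd u + snd v).
Definition vscale (a : R) (u : vec) : vec := (a * fst u, a * snd u).

(* A configuration of n opinions: indices 0..n-1 (values at k >= n are irrelevant). *)
Definition config := nat -> vec.

Definition is_config (n : nat) (U : config) : Prop :=
  forall i, (i < n)%nat -> ip (U i) (U i) = 1.

Definition stable (f : R -> R) : Prop :=
  (forall A, -1 <= A <= 1 -> forall eps, 0 < eps -> exists delta, 0 < delta /\
     forall B, -1 <= B <= 1 -> Rabs (B - A) < delta -> Rabs (f B - f A) < eps) /\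
  (forall A, -1 <= A <= 1 ->
     (0 < A -> 0 < f A) /\ (A < 0 -> f A < 0) /\ (A = 0 -> f A = 0)).

Definition interv_w (f : R -> R) (U : config) (i j : nat) : vec :=
  vadd (U i) (vscale (f (ip (U i) (U j))) (U j)).

Definition intervene (f : R -> R) (U : config) (i j : nat) : config :=
  fun k => if Nat.eqb k i then vscale (/ vnorm (interv_w f U i j)) (interv_w f U i j)
           else U k.

(* A sequence of interventions applied in list order, each one legal:
   i <> j, both indices in range, and w <> 0 (so normalization is defined). *)
Fixpoint valid_seq (f : R -> R) (n : nat) (U : config) (s : list (nat * nat)) : Prop :=
  match s with
  | nil => True
  | (i, j) :: s' => (i < n)%nat /\ (j < n)%nat /\ i <> j /\
                    interv_w f U i j <> (0, 0) /\
                    valid_seq f n (intervene f U i j) s'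
  end.

Fixpoint apply_seq (f : R -> R) (U : config) (s : list (nat * nat)) : config :=
  match s with
  | nil => U
  | (i, j) :: s' => apply_seq f (intervene f U i j) s'
  end.

Definition eps_active (n : nat) (eps : R) (U : config) : Prop :=
  exists i j, (i < n)%nat /\ (j < n)%nat /\
    eps < Rabs (ip (U i) (U j)) < 1 - eps.

Definition eps_inactive (n : nat) (eps : R) (U : config) : Prop :=
  ~ eps_active n eps U.

Definition active (n : nat) (U : config) : Prop := eps_active n 0 U.

Definition strictly_convex (n : nat) (U : config) : Prop :=
  exists b : nat -> R, (forall i, (i < n)%nat -> b i = 1 \/ b i = -1) /\
    forall i j, (i < n)%nat -> (j < n)%nat ->
      ip (vscale (b i) (U i)) (vscale (b j) (U j)) > 0.

(* Main.v *)
Require Import Defs.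
From Stdlib Require Import Reals Lra Lia List Psatz FunctionalExtensionality Classical.
Open Scope R_scope.

Definition clamp (x : R) : R := Rmax (1/2) (Rmin x 1).

Lemma clamp_in x : 1/2 <= clamp x <= 1.
Proof. unfold clamp, Rmax, Rmin; repeat destruct Rle_dec; lra. Qed.

Lemma clamp_id x : 1/2 <= x <= 1 -> clamp x = x.
Proof. intros; unfold clamp, Rmax, Rmin; repeat destruct Rle_dec; lra. Qed.

Lemma clamp_lip x y : Rabs (clamp x - clamp y) <= Rabs (x - y).
Proof. unfold clamp, Rmax, Rmin; repeat destruct Rle_dec; split_Rabs; lra. Qed.

Lemma cont_clamp f (s : R) : stable f -> (s = 1 \/ s = -1) ->
  forall c, continuity_pt (fun x => Rabs (f (s * clamp x))) c.
Proof.
  intros [Hc _] Hs c.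
  unfold continuity_pt, continue_in, limit1_in, limit_in; simpl; unfold R_dist.
  intros eps Heps.
  assert (HA : -1 <= s * clamp c <= 1) by (pose proof (clamp_in c); destruct Hs; subst; lra).
  destruct (Hc _ HA eps Heps) as [d [Hd H]].
  exists d; split; [lra|].
  intros x [_ Hx].
  assert (HB : -1 <= s * clamp x <= 1) by (pose proof (clamp_in x); destruct Hs; subst; lra).
  assert (Hl : Rabs (s * clamp x - s * clamp c) < d).
  { pose proof (clamp_lip x c).
    replace (s * clamp x - s * clamp c) with (s * (clamp x - clamp c)) by ring.
    rewrite Rabs_mult. destruct Hs; subst; split_Rabs; lra. }
  specialize (H _ HB Hl).
  eapply Rle_lt_trans; [apply Rabs_triang_inv2|exact H].
Qed.

Lemma lower_bound f : stable f ->
  exists m, 0 < m /\ forall A, 1/2 <= Rabs A <= 1 -> m <= Rabs (f A).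
Proof.
  intros Hf.
  assert (Hp : forall x, 1/2 <= x <= 1 -> 0 < f x /\ f (-x) < 0).
  { intros x Hx. destruct Hf as [_ Hs].
    destruct (Hs x ltac:(lra)) as [H1 _]. destruct (Hs (-x) ltac:(lra)) as [_ [H2 _]].
    split; [apply H1; lra | apply H2; lra]. }
  destruct (continuity_ab_min (fun x => Rabs (f (1 * clamp x))) (1/2) 1 ltac:(lra)
     (fun c _ => cont_clamp f 1 Hf (or_introl eq_refl) c)) as [m1 [H1 Hm1]].
  destruct (continuity_ab_min (fun x => Rabs (f (-1 * clamp x))) (1/2) 1 ltac:(lra)
     (fun c _ => cont_clamp f (-1) Hf (or_intror eq_refl) c)) as [m2 [H2 Hm2]].
  simpl in *.
  rewrite clamp_id in H1, H2 by lra.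
  exists (Rmin (Rabs (f (1 * m1))) (Rabs (f (-1 * m2)))).
  split.
  - destruct (Hp m1 Hm1) as [Ha _]. destruct (Hp m2 Hm2) as [_ Hb].
    apply Rmin_glb_lt.
    + replace (1*m1) with m1 by ring. rewrite Rabs_pos_eq; lra.
    + replace (-1*m2) with (-m2) by ring. rewrite Rabs_left; lra.
  - intros A HA. destruct (Rle_or_lt 0 A) as [HA0|HA0].
    + rewrite Rabs_pos_eq in HA by lra.
      specialize (H1 A HA). rewrite clamp_id in H1 by lra.
      replace (1 * A) with A in H1 by ring.
      eapply Rle_trans; [apply Rmin_l|exact H1].
    + rewrite Rabs_left in HA by lra.
      specialize (H2 (-A) HA). rewrite clamp_id in H2 by lra.
      replace (-1 * -A) with A in H2 by ring.
      eapply Rle_trans; [apply Rmin_r|exact H2].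
Qed.

Definition det (u v : vec) : R := fst u * snd v - snd u * fst v.

Lemma ip_sym u v : ip u v = ip v u.
Proof. unfold ip; ring. Qed.

Lemma unit_pyth u v : ip u u = 1 -> ip v v = 1 -> (ip u v)^2 + (det u v)^2 = 1.
Proof.
  destruct u as [u1 u2], v as [v1 v2]; unfold ip, det; simpl; intros Hu Hv.
  transitivity ((u1*u1+u2*u2)*(v1*v1+v2*v2)); [ring | rewrite Hu, Hv; ring].
Qed.

Lemma sq_le1_abs x : x^2 <= 1 -> Rabs x <= 1.
Proof. intros; split_Rabs; nra. Qed.

Lemma ip_le1 u v : ip u u = 1 -> ip v v = 1 -> Rabs (ip u v) <= 1.
Proof. intros; apply sq_le1_abs; pose proof (unit_pyth u v H H0); nra. Qed.

Lemma det_le1 u v : ip u u = 1 -> ip v v = 1 -> Rabs (det u v) <= 1.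
Proof. intros; apply sq_le1_abs; pose proof (unit_pyth u v H H0); nra. Qed.

Lemma det_sym u v : det u v = - det v u.
Proof. unfold det; ring. Qed.

Lemma det_tri_ip w x y : ip w w = 1 -> ip x x = 1 -> ip y y = 1 ->
  Rabs (det x y) <= Rabs (ip x w) + Rabs (ip y w).
Proof.
  intros Hw Hx Hy.
  assert (E : det x y = ip x w * det w y - ip y w * det w x).
  { destruct w as [w1 w2], x as [x1 x2], y as [y1 y2]; unfold ip, det in *; simpl in *.
    replace (x1 * y2 - x2 * y1) with ((x1 * y2 - x2 * y1) * (w1*w1+w2*w2)) by (rewrite Hw; ring).
    ring. }
  rewrite E. pose proof (det_le1 w y Hw Hy). pose proof (det_le1 w x Hw Hx).
  eapply Rle_trans; [apply Rabs_triang|]. rewrite Rabs_Ropp, !Rabs_mult.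
  pose proof (Rabs_pos (ip x w)); pose proof (Rabs_pos (ip y w)). nra.
Qed.

Definition Jv (w : vec) : vec := (- snd w, fst w).

Lemma det_tri_det w x y : ip w w = 1 -> ip x x = 1 -> ip y y = 1 ->
  Rabs (det x y) <= Rabs (det x w) + Rabs (det y w).
Proof.
  intros Hw Hx Hy.
  assert (HJ : ip (Jv w) (Jv w) = 1) by (destruct w; unfold ip, Jv in *; simpl in *; lra).
  pose proof (det_tri_ip (Jv w) x y HJ Hx Hy).
  replace (ip x (Jv w)) with (- det x w) in H by (unfold ip, det, Jv; simpl; ring).
  replace (ip y (Jv w)) with (- det y w) in H by (unfold ip, det, Jv; simpl; ring).
  rewrite !Rabs_Ropp in H; exact H.
Qed.

Lemma ip_expand w x y : ip w w = 1 -> ip x y = ip x w * ip y w + det w x * det w y.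
Proof.
  intros Hw; destruct w as [w1 w2], x as [x1 x2], y as [y1 y2]; unfold ip, det in *; simpl in *.
  replace (x1 * y1 + x2 * y2) with ((x1 * y1 + x2 * y2) * (w1*w1+w2*w2)) by (rewrite Hw; ring).
  ring.
Qed.

Lemma same1 a x y : ip a a = 1 -> ip x x = 1 -> ip y y = 1 ->
  ip x a > 0 -> ip y a > 0 -> Rabs (det x a) <= 1/8 -> Rabs (det y a) <= 1/8 ->
  ip x y > 0.
Proof.
  intros Ha Hx Hy Pa Pb Dx Dy.
  rewrite (ip_expand a x y Ha).
  pose proof (unit_pyth x a Hx Ha) as E1. pose proof (unit_pyth y a Hy Ha) as E2.
  rewrite (det_sym a x), (det_sym a y).
  assert (Sx : (det x a)^2 <= 1/64) by (split_Rabs; nra).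
  assert (Sy : (det y a)^2 <= 1/64) by (split_Rabs; nra).
  assert (Ax : ip x a >= 1/2) by nra.
  assert (Ay : ip y a >= 1/2) by nra.
  assert (Rabs (det x a * det y a) <= 1/64) by (rewrite Rabs_mult; pose proof (Rabs_pos (det x a)); nra).
  replace (ip x a * ip y a + - det x a * - det y a) with (ip x a * ip y a + det x a * det y a) by ring.
  split_Rabs; nra.
Qed.

Lemma cross1 a c x y : ip a a = 1 -> ip c c = 1 -> ip x x = 1 -> ip y y = 1 ->
  ip a c > 0 -> ip x a > 0 -> ip y c > 0 ->
  Rabs (det x a) <= ip a c / 8 -> Rabs (det y c) <= ip a c / 8 -> ip x y > 0.
Proof.
  intros Ha Hc Hx Hy G Pa Pc Dx Dy.
  set (g := ip a c) in *.
  assert (E : ip x y = ip x a * ip y c * g - ip x a * det c y * det a c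
                       + det a x * ip y c * det a c + det a x * det c y * g).
  { unfold g; destruct a as [a1 a2], c as [c1 c2], x as [x1 x2], y as [y1 y2];
      unfold ip, det in *; simpl in *.
    replace (x1 * y1 + x2 * y2) with ((x1 * y1 + x2 * y2) * (a1*a1+a2*a2) * (c1*c1+c2*c2))
      by (rewrite Ha, Hc; ring). ring. }
  rewrite E.
  pose proof (ip_le1 a c Ha Hc) as Hg. pose proof (det_le1 a c Ha Hc) as Hk.
  pose proof (unit_pyth x a Hx Ha) as E1. pose proof (unit_pyth y c Hy Hc) as E2.
  rewrite (det_sym a x). rewrite (det_sym c y).
  set (s := det x a) in *. set (t := det y c) in *. set (k := det a c) in *.
  set (al := ip x a) in *. set (be := ip y c) in *.
  assert (g <= 1) by (unfold g in *; split_Rabs; lra).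
  assert (s^2 <= 1/64) by (split_Rabs; nra).
  assert (t^2 <= 1/64) by (split_Rabs; nra).
  assert (al >= 9/10) by nra. assert (be >= 9/10) by nra.
  assert (al <= 1) by nra. assert (be <= 1) by nra.
  assert (B1 : Rabs (al * - t * k) <= g/8).
  { rewrite !Rabs_mult, Rabs_Ropp. pose proof (Rabs_pos t). pose proof (Rabs_pos k).
    rewrite (Rabs_pos_eq al) by lra. assert (Rabs t * Rabs k <= g/8) by nra.
    assert (0 <= Rabs t * Rabs k) by nra. nra. }
  assert (B2 : Rabs (- s * be * k) <= g/8).
  { rewrite !Rabs_mult, Rabs_Ropp. pose proof (Rabs_pos s). pose proof (Rabs_pos k).
    rewrite (Rabs_pos_eq be) by lra. assert (Rabs s * Rabs k <= g/8) by nra.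
    assert (0 <= Rabs s * Rabs k) by nra. nra. }
  assert (B3 : Rabs (- s * - t * g) <= g/64).
  { rewrite !Rabs_mult, !Rabs_Ropp. pose proof (Rabs_pos s). pose proof (Rabs_pos t).
    rewrite (Rabs_pos_eq g) by lra. assert (Rabs s * Rabs t <= 1/64) by nra. nra. }
  assert (al * be >= 81/100) by nra.
  assert (al * be * g >= 81/100 * g) by nra.
  replace (al * be * g - al * - t * k + - s * be * k + - s * - t * g)
    with (al * be * g - (al * - t * k) + (- s * be * k) + (- s * - t * g)) by ring.
  split_Rabs; nra.
Qed.

Definition phi (f : R -> R) (a v : vec) : vec :=
  vscale (/ vnorm (vadd v (vscale (f (ip v a)) a))) (vadd v (vscale (f (ip v a)) a)).

Lemma ip_scale_l r u v : ip (vscale r u) v = r * ip u v.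
Proof. unfold ip, vscale; simpl; ring. Qed.
Lemma ip_scale_r r u v : ip u (vscale r v) = r * ip u v.
Proof. unfold ip, vscale; simpl; ring. Qed.
Lemma det_scale_l r u v : det (vscale r u) v = r * det u v.
Proof. unfold det, vscale; simpl; ring. Qed.

Section Step.
Variable f : R -> R.
Variable m : R.
Hypothesis Hm0 : 0 < m.
Hypothesis Hm : forall A, 1/2 <= Rabs A <= 1 -> m <= Rabs (f A).
Hypothesis Hsg : forall A, -1 <= A <= 1 ->
     (0 < A -> 0 < f A) /\ (A < 0 -> f A < 0) /\ (A = 0 -> f A = 0).

Lemma step_N a v : ip a a = 1 -> ip v v = 1 -> 1/2 <= Rabs (ip v a) ->
  let w := vadd v (vscale (f (ip v a)) a) in ip w w >= 1 + m.
Proof.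
  intros Ha Hv HA w.
  assert (E : ip w w = 1 + 2 * (f (ip v a) * ip v a) + (f (ip v a))^2).
  { unfold w. destruct v as [v1 v2], a as [a1 a2]; unfold ip, vadd, vscale in *; simpl in *.
    set (c := f (v1 * a1 + v2 * a2)).
    transitivity ((v1*v1+v2*v2) + 2 * (c * (v1 * a1 + v2 * a2)) + c^2 * (a1*a1+a2*a2)); [ring|].
    rewrite Hv, Ha; ring. }
  rewrite E.
  pose proof (ip_le1 v a Hv Ha) as H1.
  specialize (Hm (ip v a) (conj HA H1)).
  assert (HA1 : -1 <= ip v a <= 1) by (split_Rabs; lra).
  destruct (Hsg _ HA1) as [P [N _]].
  assert (f (ip v a) * ip v a >= m / 2).
  { destruct (Rle_or_lt 0 (ip v a)).
    - assert (0 < ip v a) by (split_Rabs; lra).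
      specialize (P H0). rewrite Rabs_pos_eq in Hm, HA by lra. nra.
    - specialize (N H). rewrite Rabs_left in Hm, HA by lra. nra. }
  nra.
Qed.

Lemma step_props a v : ip a a = 1 -> ip v v = 1 -> 1/2 <= Rabs (ip v a) ->
  vadd v (vscale (f (ip v a)) a) <> (0, 0) /\
  ip (phi f a v) (phi f a v) = 1 /\
  (det (phi f a v) a)^2 * (1 + m) <= (det v a)^2 /\
  1/2 <= Rabs (ip (phi f a v) a).
Proof.
  intros Ha Hv HA.
  pose proof (step_N a v Ha Hv HA) as HN. simpl in HN.
  set (w := vadd v (vscale (f (ip v a)) a)) in *.
  assert (Hpos : 0 < ip w w) by lra.
  assert (Hs : 0 < sqrt (ip w w)) by (apply sqrt_lt_R0; lra).
  assert (Hsq : sqrt (ip w w) * sqrt (ip w w) = ip w w) by (apply sqrt_sqrt; lra).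
  assert (Hdet : det w a = det v a).
  { unfold w, det, vadd, vscale; simpl; ring. }
  assert (Hu : ip (phi f a v) (phi f a v) = 1).
  { unfold phi; fold w. unfold vnorm. rewrite ip_scale_l, ip_scale_r.
    replace (/ sqrt (ip w w) * (/ sqrt (ip w w) * ip w w)) with (ip w w / (sqrt (ip w w) * sqrt (ip w w)))
      by (field; lra).
    rewrite Hsq. field. lra. }
  assert (Hd : (det (phi f a v) a)^2 * (1 + m) <= (det v a)^2).
  { unfold phi; fold w. unfold vnorm. rewrite det_scale_l, Hdet.
    replace ((/ sqrt (ip w w) * det v a) ^ 2) with ((det v a)^2 / (sqrt (ip w w) * sqrt (ip w w)))
      by (field; lra).
    rewrite Hsq.
    apply (Rmult_le_reg_r (ip w w)); [lra|].
    replace ((det v a)^2 / ip w w * (1 + m) * ip w w) with ((det v a)^2 * (1+m)) by (field; lra).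
    pose proof (pow2_ge_0 (det v a)). nra. }
  split; [| split; [exact Hu | split; [exact Hd|]]].
  - intro E. rewrite E in Hpos. unfold ip in Hpos; simpl in Hpos. lra.
  - pose proof (unit_pyth _ _ Hu Ha). pose proof (unit_pyth _ _ Hv Ha).
    pose proof (pow2_ge_0 (det (phi f a v) a)).
    assert ((ip (phi f a v) a)^2 >= 1/4).
    { assert ((ip v a)^2 >= 1/4) by (split_Rabs; nra). nra. }
    split_Rabs; nra.
Qed.
End Step.

Section Iter.
Variable f : R -> R.
Variable m : R.
Hypothesis Hm0 : 0 < m.
Hypothesis Hm : forall A, 1/2 <= Rabs A <= 1 -> m <= Rabs (f A).
Hypothesis Hsg : forall A, -1 <= A <= 1 ->
     (0 < A -> 0 < f A) /\ (A < 0 -> f A < 0) /\ (A = 0 -> f A = 0).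

Lemma iter_props a v k : ip a a = 1 -> ip v v = 1 -> 1/2 <= Rabs (ip v a) ->
  ip (Nat.iter k (phi f a) v) (Nat.iter k (phi f a) v) = 1 /\
  1/2 <= Rabs (ip (Nat.iter k (phi f a) v) a) /\
  (det (Nat.iter k (phi f a) v) a)^2 * (1 + m)^k <= (det v a)^2.
Proof.
  intros Ha Hv HA. induction k as [|k [IH1 [IH2 IH3]]].
  - simpl. repeat split; auto. lra.
  - simpl Nat.iter.
    destruct (step_props f m Hm0 Hm Hsg a _ Ha IH1 IH2) as [_ [P1 [P2 P3]]].
    repeat split; auto.
    simpl. pose proof (pow_lt (1+m) k ltac:(lra)).
    pose proof (pow2_ge_0 (det (phi f a (Nat.iter k (phi f a) v)) a)). nra.
Qed.

Lemma bernoulli k : 1 + INR k * m <= (1 + m)^k.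
Proof.
  induction k.
  - simpl; lra.
  - rewrite S_INR. simpl. pose proof (pos_INR k). nra.
Qed.

Lemma apply_repeat U i t k : i <> t ->
  apply_seq f U (repeat (i,t) k) =
  fun x => if Nat.eqb x i then Nat.iter k (phi f (U t)) (U i) else U x.
Proof.
  revert U; induction k; intros U Hit.
  - simpl. apply functional_extensionality; intro x.
    destruct (Nat.eqb_spec x i); subst; auto.
  - simpl. rewrite IHk by auto.
    apply functional_extensionality; intro x.
    unfold intervene. rewrite Nat.eqb_refl.
    destruct (Nat.eqb_spec t i); [congruence|].
    destruct (Nat.eqb_spec x i); auto.
    subst x. change (Nat.iter k (phi f (U t)) (phi f (U t) (U i)) = Nat.iter (S k) (phi f (U t)) (U i)). symmetry; apply Nat.iter_succ_r.
Qed.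

Lemma valid_repeat n U i t k : (i < n)%nat -> (t < n)%nat -> i <> t ->
  ip (U i) (U i) = 1 -> ip (U t) (U t) = 1 -> 1/2 <= Rabs (ip (U i) (U t)) ->
  valid_seq f n U (repeat (i,t) k).
Proof.
  revert U; induction k; intros U Hi Ht Hit Hui Hut HA.
  - simpl; auto.
  - simpl.
    destruct (step_props f m Hm0 Hm Hsg (U t) (U i) Hut Hui HA) as [P0 [P1 [_ P3]]].
    repeat split; auto.
    apply IHk; auto; unfold intervene; try rewrite Nat.eqb_refl;
      destruct (Nat.eqb_spec t i); try congruence; auto.
Qed.

Lemma apply_app U l1 l2 : apply_seq f U (l1 ++ l2) = apply_seq f (apply_seq f U l1) l2.
Proof.
  revert U; induction l1 as [|[i j] l1 IH]; intros U; simpl; auto.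
Qed.

Lemma valid_app n U l1 l2 : valid_seq f n U l1 -> valid_seq f n (apply_seq f U l1) l2 ->
  valid_seq f n U (l1 ++ l2).
Proof.
  revert U; induction l1 as [|[i j] l1 IH]; intros U H1 H2; simpl in *; auto.
  destruct H1 as [? [? [? [? ?]]]]. repeat split; auto.
Qed.

Section Blocks.
Variable U : config.
Variables n p q k : nat.
Variable tgt : nat -> nat.
Hypothesis tgt_pq : forall i, tgt i = p \/ tgt i = q.

Definition block (i : nat) : list (nat * nat) :=
  if orb (Nat.eqb i p) (Nat.eqb i q) then nil else repeat (i, tgt i) k.
Definition blocks (N : nat) := flat_map block (seq 0 N).

Lemma blocks_S N : blocks (S N) = blocks N ++ block N.
Proof. unfold blocks. rewrite seq_S, flat_map_app. simpl. rewrite app_nil_r. reflexivity. Qed.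

Definition Vf (N : nat) : config := fun x =>
  if andb (andb (Nat.ltb x N) (negb (Nat.eqb x p))) (negb (Nat.eqb x q))
  then Nat.iter k (phi f (U (tgt x))) (U x) else U x.

Lemma apply_blocks N : apply_seq f U (blocks N) = Vf N.
Proof.
  induction N.
  - unfold blocks; simpl. apply functional_extensionality; intro x. unfold Vf.
    destruct (Nat.ltb_spec x 0); [lia|]. reflexivity.
  - rewrite blocks_S, apply_app, IHN. unfold block.
    destruct (Nat.eqb_spec N p); destruct (Nat.eqb_spec N q); simpl.
    + apply functional_extensionality; intro x. unfold Vf.
      destruct (Nat.ltb_spec x N); destruct (Nat.ltb_spec x (S N));
      destruct (Nat.eqb_spec x p); destruct (Nat.eqb_spec x q); simpl; auto; lia.
    + apply functional_extensionality; intro x. unfold Vf.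
      destruct (Nat.ltb_spec x N); destruct (Nat.ltb_spec x (S N));
      destruct (Nat.eqb_spec x p); destruct (Nat.eqb_spec x q); simpl; auto; lia.
    + apply functional_extensionality; intro x. unfold Vf.
      destruct (Nat.ltb_spec x N); destruct (Nat.ltb_spec x (S N));
      destruct (Nat.eqb_spec x p); destruct (Nat.eqb_spec x q); simpl; auto; lia.
    + assert (HNt : N <> tgt N) by (destruct (tgt_pq N) as [E|E]; rewrite E; auto).
      rewrite apply_repeat by exact HNt.
      apply functional_extensionality; intro x. unfold Vf.
      assert (Et : andb (andb (Nat.ltb (tgt N) N) (negb (Nat.eqb (tgt N) p))) (negb (Nat.eqb (tgt N) q)) = false).
      { destruct (tgt_pq N) as [E|E]; rewrite E; rewrite ?Nat.eqb_refl;
          repeat match goal with |- context[Nat.ltb ?a ?b] => destruct (Nat.ltb a b)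
                 | |- context[Nat.eqb ?a ?b] => destruct (Nat.eqb a b) end; reflexivity. }
      rewrite Et. rewrite Nat.ltb_irrefl. simpl.
      destruct (Nat.eqb_spec x N).
      * subst x. destruct (Nat.ltb_spec N (S N)); [|lia].
        destruct (Nat.eqb_spec N p); [contradiction|]. destruct (Nat.eqb_spec N q); [contradiction|].
        reflexivity.
      * destruct (Nat.ltb_spec x N); destruct (Nat.ltb_spec x (S N)); simpl; auto; lia.
Qed.

Lemma length_blocks N : (length (blocks N) <= N * k)%nat.
Proof.
  induction N; [simpl; lia|].
  rewrite blocks_S, length_app. unfold block.
  destruct (orb _ _); simpl; [lia|]. rewrite repeat_length. lia.
Qed.

Hypothesis Hgood : forall i, (i < n)%nat -> i <> p -> i <> q ->
  ip (U i) (U i) = 1 /\ ip (U (tgt i)) (U (tgt i)) = 1 /\ (tgt i < n)%nat /\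
  1/2 <= Rabs (ip (U i) (U (tgt i))).

Lemma valid_blocks N : (N <= n)%nat -> valid_seq f n U (blocks N).
Proof.
  induction N; intros HN.
  - unfold blocks; simpl; auto.
  - rewrite blocks_S. apply valid_app; [apply IHN; lia|].
    rewrite apply_blocks. unfold block.
    destruct (Nat.eqb_spec N p); destruct (Nat.eqb_spec N q); simpl; auto.
    assert (HNt : N <> tgt N) by (destruct (tgt_pq N) as [E|E]; rewrite E; auto).
    destruct (Hgood N ltac:(lia) n0 n1) as [G1 [G2 [G3 G4]]].
    assert (E1 : Vf N N = U N) by (unfold Vf; rewrite Nat.ltb_irrefl; reflexivity).
    assert (E2 : Vf N (tgt N) = U (tgt N)).
    { unfold Vf. destruct (tgt_pq N) as [E|E]; rewrite E; rewrite ?Nat.eqb_refl;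
          repeat match goal with |- context[Nat.ltb ?a ?b] => destruct (Nat.ltb a b)
                 | |- context[Nat.eqb ?a ?b] => destruct (Nat.eqb a b) end; reflexivity. }
    apply valid_repeat; try rewrite E1; try rewrite E2; auto; lia.
Qed.
End Blocks.
End Iter.

Definition sgn (x : R) : R := if Rlt_dec 0 x then 1 else -1.
Lemma sgn_pm x : sgn x = 1 \/ sgn x = -1.
Proof. unfold sgn; destruct Rlt_dec; auto. Qed.
Lemma sgn_pos x : x <> 0 -> sgn x * x > 0.
Proof. unfold sgn; destruct Rlt_dec; intros; [lra|]. assert (x < 0) by lra. lra. Qed.

Lemma ip_scale2 r s u v : ip (vscale r u) (vscale s v) = r * s * ip u v.
Proof. unfold ip, vscale; simpl; ring. Qed.
Lemma det_scale2 r s u v : det (vscale r u) (vscale s v) = r * s * det u v.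
Proof. unfold det, vscale; simpl; ring. Qed.
Lemma pm_sq r : r = 1 \/ r = -1 -> r * r = 1.
Proof. intros [->| ->]; ring. Qed.
Lemma pm_abs r x : r = 1 \/ r = -1 -> Rabs (r * x) = Rabs x.
Proof. intros [->| ->]; rewrite Rabs_mult; split_Rabs; lra. Qed.

Lemma framed v a s D : s = 1 \/ s = -1 -> ip v v = 1 -> ip a a = 1 -> ip v a <> 0 ->
  Rabs (det v a) <= D ->
  ip (vscale (s * sgn (ip v a)) v) (vscale (s * sgn (ip v a)) v) = 1 /\
  ip (vscale s a) (vscale s a) = 1 /\
  ip (vscale (s * sgn (ip v a)) v) (vscale s a) > 0 /\
  Rabs (det (vscale (s * sgn (ip v a)) v) (vscale s a)) <= D.
Proof.
  intros Hs Hv Ha Hne HD.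
  pose proof (sgn_pm (ip v a)) as Hg. pose proof (sgn_pos _ Hne) as Hp.
  pose proof (pm_sq s Hs). pose proof (pm_sq _ Hg).
  rewrite !ip_scale2, det_scale2, Hv, Ha.
  split; [|split; [|split]].
  - transitivity ((s*s) * (sgn (ip v a) * sgn (ip v a))); [ring|]. rewrite H, H0; ring.
  - rewrite H; ring.
  - replace (s * sgn (ip v a) * s * ip v a) with ((s*s) * (sgn (ip v a) * ip v a)) by ring.
    rewrite H; lra.
  - replace (s * sgn (ip v a) * s * det v a) with (sgn (ip v a) * ((s*s) * det v a)) by ring.
    rewrite H, pm_abs by auto. rewrite Rmult_1_l; auto.
Qed.

Lemma det_small_ip x y D : ip x x = 1 -> ip y y = 1 -> Rabs (det x y) <= D -> D <= 1/4 ->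
  1/2 <= Rabs (ip x y).
Proof.
  intros Hx Hy Hd HD. pose proof (unit_pyth x y Hx Hy).
  assert ((det x y)^2 <= 1/16) by (split_Rabs; nra).
  assert ((ip x y)^2 >= 1/4) by nra. split_Rabs; nra.
Qed.

Lemma abs_sq_le d B : d^2 <= B^2 -> 0 <= B -> Rabs d <= B.
Proof. intros; split_Rabs; nra. Qed.

Lemma list_max {T} (g : T -> R) (l : list T) : l <> nil ->
  exists x, In x l /\ forall y, In y l -> g y <= g x.
Proof.
  induction l as [|a l IH]; intros H; [congruence|].
  destruct l as [|b l'].
  - exists a; split; [left; auto|]. intros y [<-|[]]; lra.
  - destruct (IH ltac:(discriminate)) as [x [Hx Hmax]].
    destruct (Rle_lt_dec (g a) (g x)).
    + exists x; split; [right; auto|]. intros y [<-|Hy]; auto.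
    + exists a; split; [left; auto|]. intros y [<-|Hy]; [lra|]. specialize (Hmax y Hy); lra.
Qed.

Definition inXb (U : config) (i : nat) : bool :=
  if Rlt_dec (1/2) (Rabs (ip (U i) (U 0%nat))) then true else false.

Section Main.
Variable n : nat.
Hypothesis Hn : (2 <= n)%nat.
Variable f : R -> R.
Variable m : R.
Hypothesis Hm0 : 0 < m.
Hypothesis Hm : forall A, 1/2 <= Rabs A <= 1 -> m <= Rabs (f A).
Hypothesis Hsg : forall A, -1 <= A <= 1 ->
     (0 < A -> 0 < f A) /\ (A < 0 -> f A < 0) /\ (A = 0 -> f A = 0).
Variable k : nat.
Hypothesis Hk : 255 <= INR k * m.
Variable U : config.
Hypothesis HU : is_config n U.
Hypothesis Hinact : eps_inactive n (1/256) U.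

Lemma dich i : (i < n)%nat -> Rabs (ip (U i) (U 0%nat)) <= 1/256 \/ Rabs (ip (U i) (U 0%nat)) >= 1 - 1/256.
Proof.
  intros Hi. destruct (Rle_lt_dec (Rabs (ip (U i) (U 0%nat))) (1/256)); [left; auto|].
  destruct (Rle_lt_dec (1 - 1/256) (Rabs (ip (U i) (U 0%nat)))); [right; lra|].
  exfalso. apply Hinact. exists i, 0%nat. repeat split; auto; lia.
Qed.

Lemma U0 : ip (U 0%nat) (U 0%nat) = 1.
Proof. apply HU; lia. Qed.

Lemma inX_det i : (i < n)%nat -> inXb U i = true -> Rabs (det (U i) (U 0%nat)) <= 1/8.
Proof.
  intros Hi. unfold inXb. destruct Rlt_dec; [|discriminate]. intros _.
  destruct (dich i Hi); [lra|].
  pose proof (unit_pyth _ _ (HU i Hi) U0).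
  assert ((ip (U i) (U 0%nat))^2 >= (1 - 1/256)^2) by (split_Rabs; nra).
  apply abs_sq_le; lra.
Qed.

Lemma inY_ip i : (i < n)%nat -> inXb U i = false -> Rabs (ip (U i) (U 0%nat)) <= 1/256.
Proof.
  intros Hi. unfold inXb. destruct Rlt_dec; [discriminate|]. intros _.
  destruct (dich i Hi); lra.
Qed.

Lemma XX_close i j : (i < n)%nat -> (j < n)%nat -> inXb U i = true -> inXb U j = true ->
  Rabs (det (U i) (U j)) <= 1/4.
Proof.
  intros Hi Hj Xi Xj. pose proof (det_tri_det (U 0%nat) (U i) (U j) U0 (HU i Hi) (HU j Hj)).
  pose proof (inX_det i Hi Xi). pose proof (inX_det j Hj Xj). lra.
Qed.

Lemma YY_close i j : (i < n)%nat -> (j < n)%nat -> inXb U i = false -> inXb U j = false ->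
  Rabs (det (U i) (U j)) <= 1/4.
Proof.
  intros Hi Hj Xi Xj. pose proof (det_tri_ip (U 0%nat) (U i) (U j) U0 (HU i Hi) (HU j Hj)).
  pose proof (inY_ip i Hi Xi). pose proof (inY_ip j Hj Xj). lra.
Qed.

Lemma caseA : (forall i, (i < n)%nat -> inXb U i = true) -> strictly_convex n U.
Proof.
  intros HX.
  exists (fun i => 1 * sgn (ip (U i) (U 0%nat))). split.
  - intros i _. rewrite Rmult_1_l. apply sgn_pm.
  - intros i j Hi Hj.
    assert (Hne : forall l, (l < n)%nat -> ip (U l) (U 0%nat) <> 0).
    { intros l Hl E. pose proof (det_small_ip _ _ _ (HU l Hl) U0 (inX_det l Hl (HX l Hl)) ltac:(lra)).
      rewrite E, Rabs_R0 in H; lra. }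
    destruct (framed (U i) (U 0%nat) 1 (1/8) (or_introl eq_refl) (HU i Hi) U0 (Hne i Hi) (inX_det i Hi (HX i Hi))) as [A1 [A2 [A3 A4]]].
    destruct (framed (U j) (U 0%nat) 1 (1/8) (or_introl eq_refl) (HU j Hj) U0 (Hne j Hj) (inX_det j Hj (HX j Hj))) as [B1 [B2 [B3 B4]]].
    apply (same1 (vscale 1 (U 0%nat))); auto.
Qed.


Variables p q : nat.
Hypothesis Hp : (p < n)%nat.
Hypothesis Hq : (q < n)%nat.
Hypothesis Xp : inXb U p = true.
Hypothesis Yq : inXb U q = false.
Hypothesis Hmax : forall i j, (i < n)%nat -> (j < n)%nat -> inXb U i = true -> inXb U j = false ->
  Rabs (ip (U i) (U j)) <= Rabs (ip (U p) (U q)).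
Hypothesis Hact : active n U.

Let M := Rabs (ip (U p) (U q)).

Lemma M_le1 : M <= 1.
Proof. apply ip_le1; apply HU; auto. Qed.

Lemma det_ne0 x y : ip x x = 1 -> ip y y = 1 -> Rabs (ip x y) < 1 -> 0 < Rabs (det x y).
Proof.
  intros Hx Hy H. pose proof (unit_pyth x y Hx Hy).
  assert ((ip x y)^2 < 1) by (split_Rabs; nra).
  destruct (Req_dec (det x y) 0) as [E|E]; [rewrite E in *; nra|].
  apply Rabs_pos_lt; auto.
Qed.

Lemma M_pos : 0 < M.
Proof.
  destruct Hact as [i [j [Hi [Hj [H1 H2]]]]].
  destruct (inXb U i) eqn:Ei; destruct (inXb U j) eqn:Ej.
  - pose proof (det_ne0 _ _ (HU i Hi) (HU j Hj) ltac:(lra)).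
    pose proof (det_tri_ip (U q) (U i) (U j) (HU q Hq) (HU i Hi) (HU j Hj)).
    pose proof (Hmax i q Hi Hq Ei Yq). pose proof (Hmax j q Hj Hq Ej Yq). unfold M; lra.
  - pose proof (Hmax i j Hi Hj Ei Ej). unfold M; lra.
  - pose proof (Hmax j i Hj Hi Ej Ei). rewrite ip_sym in H. unfold M; lra.
  - pose proof (det_ne0 _ _ (HU i Hi) (HU j Hj) ltac:(lra)).
    pose proof (det_tri_ip (U p) (U i) (U j) (HU p Hp) (HU i Hi) (HU j Hj)).
    pose proof (Hmax p i Hp Hi Xp Ei). pose proof (Hmax p j Hp Hj Xp Ej).
    rewrite (ip_sym (U p)) in H3, H4. unfold M; lra.
Qed.

Definition tgt (i : nat) : nat := if inXb U i then p else q.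
Definition aa (i : nat) : vec := U (tgt i).

Lemma tgt_pq i : tgt i = p \/ tgt i = q.
Proof. unfold tgt; destruct (inXb U i); auto. Qed.

Lemma tgt_lt i : (tgt i < n)%nat.
Proof. unfold tgt; destruct (inXb U i); auto. Qed.

Lemma init_close i : (i < n)%nat -> 1/2 <= Rabs (ip (U i) (aa i)).
Proof.
  intros Hi. unfold aa, tgt. destruct (inXb U i) eqn:E.
  - apply det_small_ip with (D := 1/4); auto; try apply HU; auto; try lra. apply XX_close; auto.
  - apply det_small_ip with (D := 1/4); auto; try apply HU; auto; try lra. apply YY_close; auto.
Qed.

Lemma init_det i : (i < n)%nat -> Rabs (det (U i) (aa i)) <= 2 * M.
Proof.
  intros Hi. unfold aa, tgt. destruct (inXb U i) eqn:E.
  - pose proof (det_tri_ip (U q) (U i) (U p) (HU q Hq) (HU i Hi) (HU p Hp)).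
    pose proof (Hmax i q Hi Hq E Yq). unfold M; lra.
  - pose proof (det_tri_ip (U p) (U i) (U q) (HU p Hp) (HU i Hi) (HU q Hq)).
    pose proof (Hmax p i Hp Hi Xp E). rewrite (ip_sym (U p) (U i)) in H0.
    rewrite (ip_sym (U q) (U p)) in H. unfold M; lra.
Qed.

Definition VV : config := Vf f U p q k tgt n.

Lemma final_i i : (i < n)%nat -> ip (VV i) (VV i) = 1 /\ Rabs (det (VV i) (aa i)) <= M / 8.
Proof.
  intros Hi. pose proof M_pos.
  unfold VV, Vf.
  destruct (Nat.ltb_spec i n); [|lia].
  destruct (Nat.eqb_spec i p); destruct (Nat.eqb_spec i q); simpl.
  - subst. congruence.
  - subst. split; [apply HU; auto|]. unfold aa, tgt. rewrite Xp.
    replace (det (U p) (U p)) with 0 by (unfold det; ring). rewrite Rabs_R0. lra.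
  - subst. split; [apply HU; auto|]. unfold aa, tgt. rewrite Yq.
    replace (det (U q) (U q)) with 0 by (unfold det; ring). rewrite Rabs_R0. lra.
  - destruct (iter_props f m Hm0 Hm Hsg (U (tgt i)) (U i) k (HU _ (tgt_lt i)) (HU i Hi) (init_close i Hi))
      as [I1 [_ I3]].
    split; auto. fold (aa i) in I3 |- *.
    pose proof (init_det i Hi).
    pose proof (bernoulli m Hm0 k).
    assert (Hb : (det (U i) (aa i))^2 <= (2*M)^2) by (split_Rabs; nra).
    pose proof (pow2_ge_0 (det (Nat.iter k (phi f (aa i)) (U i)) (aa i))).
    apply abs_sq_le; [|lra].
    assert ((det (Nat.iter k (phi f (aa i)) (U i)) (aa i))^2 * 256 <= (2*M)^2) by nra.
    nra.
Qed.

Definition sgm := sgn (ip (U p) (U q)).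
Definition ss (i : nat) : R := if inXb U i then 1 else sgm.
Definition bb (i : nat) : R := ss i * sgn (ip (VV i) (aa i)).
Definition FF (i : nat) : vec := vscale (ss i) (aa i).

Lemma ss_pm i : ss i = 1 \/ ss i = -1.
Proof. unfold ss; destruct (inXb U i); auto. apply sgn_pm. Qed.

Lemma per_i i : (i < n)%nat ->
  ip (vscale (bb i) (VV i)) (vscale (bb i) (VV i)) = 1 /\ ip (FF i) (FF i) = 1 /\ ip (vscale (bb i) (VV i)) (FF i) > 0 /\ Rabs (det (vscale (bb i) (VV i)) (FF i)) <= M / 8.
Proof.
  intros Hi. destruct (final_i i Hi) as [F1 F2].
  pose proof M_le1.
  assert (Ha : ip (aa i) (aa i) = 1) by (apply HU, tgt_lt).
  assert (Hne : ip (VV i) (aa i) <> 0).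
  { intro E. pose proof (det_small_ip _ _ (M/8) F1 Ha F2 ltac:(lra)). rewrite E, Rabs_R0 in H0; lra. }
  exact (framed (VV i) (aa i) (ss i) (M/8) (ss_pm i) F1 Ha Hne F2).
Qed.

Lemma caseB : strictly_convex n VV.
Proof.
  exists bb. split.
  - intros i _. unfold bb. destruct (ss_pm i) as [E|E]; rewrite E;
      destruct (sgn_pm (ip (VV i) (aa i))) as [E'|E']; rewrite E'; [left|right|right|left]; ring.
  - assert (Hcr : forall i j, (i < n)%nat -> (j < n)%nat -> inXb U i = true -> inXb U j = false ->
        ip (vscale (bb i) (VV i)) (vscale (bb j) (VV j)) > 0).
    { intros i j Hi Hj Ei Ej.
      destruct (per_i i Hi) as [A1 [A2 [A3 A4]]]. destruct (per_i j Hj) as [B1 [B2 [B3 B4]]].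
      assert (G : ip (FF i) (FF j) = M).
      { unfold FF, ss, aa, tgt. rewrite Ei, Ej. rewrite ip_scale2.
        unfold M, sgm. pose proof (sgn_pos (ip (U p) (U q))).
        destruct (Req_dec (ip (U p) (U q)) 0) as [Z|Z].
        - pose proof M_pos. unfold M in H0. rewrite Z, Rabs_R0 in H0. lra.
        - specialize (H Z). unfold sgn in *. destruct Rlt_dec.
          + rewrite Rabs_pos_eq; lra.
          + rewrite Rabs_left; lra. }
      pose proof M_pos.
      apply (cross1 (FF i) (FF j)); auto; rewrite G; lra. }
    intros i j Hi Hj.
    destruct (inXb U i) eqn:Ei; destruct (inXb U j) eqn:Ej.
    + destruct (per_i i Hi) as [A1 [A2 [A3 A4]]]. destruct (per_i j Hj) as [B1 [B2 [B3 B4]]].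
      assert (FE : FF j = FF i) by (unfold FF, ss, aa, tgt; rewrite Ei, Ej; auto).
      rewrite FE in *. pose proof M_le1. pose proof M_pos.
      apply (same1 (FF i)); auto; lra.
    + auto.
    + rewrite ip_sym. auto.
    + destruct (per_i i Hi) as [A1 [A2 [A3 A4]]]. destruct (per_i j Hj) as [B1 [B2 [B3 B4]]].
      assert (FE : FF j = FF i) by (unfold FF, ss, aa, tgt; rewrite Ei, Ej; auto).
      rewrite FE in *. pose proof M_le1. pose proof M_pos.
      apply (same1 (FF i)); auto; lra.
Qed.

End Main.

Theorem mainTheorem8 :
  forall (n : nat), (2 <= n)%nat ->
  forall (f : R -> R), stable f ->
  exists K : nat, (0 < K)%nat /\
    forall U : config, is_config n U ->
      eps_inactive n (1/256) U -> active n U ->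
      exists s : list (nat * nat),
        (length s <= K)%nat /\ valid_seq f n U s /\
        strictly_convex n (apply_seq f U s).
Proof.
  intros n Hn f Hf.
  destruct (lower_bound f Hf) as [m [Hm0 Hm]].
  pose proof (proj2 Hf) as Hsg.
  destruct (INR_unbounded (255 / m)) as [k0 Hk0].
  set (k := S k0).
  assert (Hk : 255 <= INR k * m).
  { unfold k. rewrite S_INR.
    assert (255 / m * m = 255) by (field; lra).
    pose proof (pos_INR k0). nra. }
  exists (n * k)%nat. split; [unfold k; lia|].
  intros U HU Hinact Hact.
  destruct (classic (exists j, (j < n)%nat /\ inXb U j = false)) as [[j0 [Hj0 Ej0]] | Hno].
  - set (L := filter (fun pr => andb (inXb U (fst pr)) (negb (inXb U (snd pr))))
                     (list_prod (seq 0 n) (seq 0 n))).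
    assert (X0 : inXb U 0%nat = true).
    { unfold inXb. destruct Rlt_dec; auto. exfalso. apply n0.
      rewrite (HU 0%nat ltac:(lia)), Rabs_R1. lra. }
    assert (HinL : forall i j, In (i, j) L <-> ((i < n)%nat /\ (j < n)%nat /\ inXb U i = true /\ inXb U j = false)).
    { intros i j. unfold L. rewrite filter_In, in_prod_iff, !in_seq. simpl.
      destruct (inXb U i); destruct (inXb U j); simpl; intuition (try lia; try discriminate). }
    assert (Hne : L <> nil).
    { intro E. assert (In (0%nat, j0) L) by (apply HinL; repeat split; auto; lia).
      rewrite E in H; destruct H. }
    destruct (list_max (fun pr => Rabs (ip (U (fst pr)) (U (snd pr)))) L Hne) as [[p q] [Hin Hmx]].
    apply HinL in Hin. destruct Hin as [Hp [Hq [Xp Yq]]].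
    assert (Hmax : forall i j, (i < n)%nat -> (j < n)%nat -> inXb U i = true -> inXb U j = false ->
      Rabs (ip (U i) (U j)) <= Rabs (ip (U p) (U q))).
    { intros i j Hi Hj Ei Ej. apply (Hmx (i, j)). apply HinL; auto. }
    exists (blocks p q k (tgt U p q) n). split; [|split].
    + apply length_blocks.
    + apply (valid_blocks f m Hm0 Hm Hsg U n p q k (tgt U p q) (tgt_pq U p q)); [|lia].
      intros i Hi _ _. repeat split.
      * apply HU; auto.
      * apply HU, tgt_lt; auto.
      * apply tgt_lt; auto.
      * exact (init_close n Hn f m Hm U HU Hinact p q Hp Hq Xp Yq i Hi).
    + rewrite (apply_blocks f U p q k (tgt U p q) (tgt_pq U p q)).
      exact (caseB n Hn f m Hm0 Hm Hsg k Hk U HU Hinact p q Hp Hq Xp Yq Hmax Hact).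
  - exists nil. simpl. split; [lia|]. split; auto.
    eapply caseA; eauto. intros i Hi.
    destruct (inXb U i) eqn:E; auto. exfalso; apply Hno; eauto.
Qed.
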